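(* Let $\xi$ be the random potential defined in the context. There is a constant $c_0>0$ such that $\mathbb{P}$-a.s. there exists a (random) increasing sequence $(x_n)_{n\in\mathbb{N}}$ of reals tending to infinity such that for all $n$ $$\xi(x)=\mathsf{ei}\ \ \forall x\in[x_n-2c_0\ln n,\,x_n],\qquad \xi(x)=\mathsf{es}\ \ \forall x\in[x_n+2,\,x_n+2c_0\ln n-2],$$ and $\xi$ is non-decreasing on $[x_n-2c_0\ln n,\,x_n+2c_0\ln n-2]$. Moreover, $\mathbb{P}$-a.s., $$1\le\liminf_{n\to\infty}\frac{x_n}{n}\le\limsup_{n\to\infty}\frac{x_n}{n}\le2.$$
   Context: Fix constants $0<\mathsf{ei}<\mathsf{es}<\infty$ with $\mathsf{es}/\mathsf{ei}>2$. Let $\chi:[0,\infty)\to[0,1]$ be continuous and non-increasing with $\chi(x)=1$ for $x\le1$ and $\chi(x)=0$ for $x\ge2$, and let $\omega=(\omega^i)_{i\in\mathbb{Z}}$ be a Poisson point process on $\mathbb{R}$ with intensity $1$ on $(\Omega,\mathcal F,\mathbb P)$. Define $\xi(x):=\mathsf{ei}+(\mathsf{es}-\mathsf{ei})\sup\{\chi(|x-\omega^i|):i\in\mathbb{Z}\}$, $x\in\mathbb{R}$. *)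

(* Defs.v *)
From HB Require Import structures.
From mathcomp Require Import all_boot all_order all_algebra.
From mathcomp Require Import all_classical all_reals all_analysis.
Set Implicit Arguments. Unset Strict Implicit. Unset Printing Implicit Defensive.
Import Order.TTheory GRing.Theory Num.Theory.
Import numFieldNormedType.Exports.
Local Open Scope classical_set_scope.
Local Open Scope ring_scope.

(* A point configuration indexed by Z: omega w : int -> R. *)

Definition count_eq {T : Type} {R : realType} (omega : T -> int -> R)
  (w : T) (A : set R) (k : nat) : Prop :=
  exists s : seq int, uniq s /\ size s = k /\
    (forall i : int, A (omega w i) <-> i \in s).

Definition bounded_real_set {R : realType} (A : set R) : Prop :=
  exists r : R, forall x, A x -> `|x| <= r.

(* Poisson point process on R with intensity 1 (Lebesgue measure):
   each point is a random variable, and for pairwise disjoint bounded Borel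
   sets A_0, ..., A_{m-1} the counts N(A_j) are independent Poisson variables
   with parameters Leb(A_j) (joint law given by the product formula). *)
Definition poisson_point_process {d : measure_display} {T : measurableType d}
  {R : realType} (P : probability T R) (omega : T -> int -> R) : Prop :=
  (forall i : int, measurable_fun setT (fun w => omega w i)) /\
  (forall (m : nat) (A : nat -> set R) (k : nat -> nat),
     (forall j, (j < m)%N -> measurable (A j) /\ bounded_real_set (A j)) ->
     (forall j j', (j < m)%N -> (j' < m)%N -> j <> j' -> A j `&` A j' = set0) ->
     P (\bigcap_(j in [set j | (j < m)%N]) [set w | count_eq omega w (A j) (k j)])
     = (\prod_(j < m)
          (let l := fine (lebesgue_measure (A j)) in
           expR (- l) * l ^+ (k j) / (k j)`!%:R)%:E)%E).

Definition xi {T : Type} {R : realType} (ei es : R) (chi : R -> R)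
  (omega : T -> int -> R) (w : T) (x : R) : R :=
  ei + (es - ei) * sup [set chi `|x - omega w i| | i in [set: int]].

(* Main.v *)
Set Warnings "-notation-overridden,-ambiguous-paths,-notation-incompatible-prefix".
Require Import Defs.
From HB Require Import structures.
From mathcomp Require Import all_boot all_order all_algebra.
From mathcomp Require Import all_classical all_reals all_analysis.
From Stdlib Require Import Lia.
From mathcomp Require Import zify ring lra.
Import Order.TTheory GRing.Theory Num.Theory.
Import numFieldNormedType.Exports.
Local Open Scope classical_set_scope.
Local Open Scope ring_scope.
Section Det.
Context (R : realType) (ei es : R) (chi : R -> R) (T : Type) (omega : T -> int -> R).
Hypothesis ei_lt_es : ei < es.
Hypothesis chi01 : forall x, 0 <= x -> 0 <= chi x <= 1.
Hypothesis chi_mono : forall x y, 0 <= x -> x <= y -> chi y <= chi x.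
Hypothesis chi1 : forall x, 0 <= x -> x <= 1 -> chi x = 1.
Hypothesis chi0 : forall x, 2 <= x -> chi x = 0.

Let S w x := [set chi `|x - omega w i| | i in [set: int]].

Lemma S_ub w x : has_ubound (S w x).
Proof. by exists 1 => _ [i _ <-]; have /andP[] := @chi01 _ (normr_ge0 (x - omega w i)). Qed.

Lemma S_n0 w x : S w x !=set0.
Proof. by exists (chi `|x - omega w 0|); exists 0. Qed.

Lemma xi_ei w x : (forall i, 2 <= `|x - omega w i|) -> xi ei es chi omega w x = ei.
Proof.
move=> H; rewrite /xi.
have -> : [set chi `|x - omega w i| | i in [set: int]] = [set 0].
  apply/seteqP; split => [_ [i _ <-]|_ ->] /=; first by rewrite chi0.
  by exists 0 => //; rewrite chi0.
by rewrite sup1 mulr0 addr0.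
Qed.

Lemma xi_es w x {i : int} : `|x - omega w i| <= 1 -> xi ei es chi omega w x = es.
Proof.
move=> H; rewrite /xi.
have -> : sup [set chi `|x - omega w i| | i in [set: int]] = 1.
  apply/eqP; rewrite eq_le; apply/andP; split.
    apply: sup_le_ub; first exact: S_n0.
    by move=> _ [j _ <-]; have /andP[] := @chi01 _ (normr_ge0 (x - omega w j)).
  rewrite -(@chi1 _ (normr_ge0 (x - omega w i)) H).
  by apply: (@ub_le_sup _ (S w x) (S_ub w x)); exists i.
by rewrite mulr1 addrC subrK.
Qed.

Lemma xi_mono w x y : (forall i, chi `|x - omega w i| <= chi `|y - omega w i|) ->
  xi ei es chi omega w x <= xi ei es chi omega w y.
Proof.
move=> H; rewrite /xi lerD2l; apply: ler_wpM2l; first by rewrite subr_ge0 ltW.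
apply: sup_le_ub; first exact: S_n0.
move=> _ [i _ <-]; apply: le_trans (H i) _.
by apply: (@ub_le_sup _ (S w y) (S_ub w y)); exists i.
Qed.

Lemma xi_le_es w x : xi ei es chi omega w x <= es.
Proof.
rewrite /xi -lerBrDl; apply: ler_piMr; first by rewrite subr_ge0 ltW.
apply: sup_le_ub; first exact: S_n0.
by move=> _ [j _ <-]; have /andP[] := @chi01 _ (normr_ge0 (x - omega w j)).
Qed.

Definition Good (w : T) (j K : nat) : Prop :=
  (forall i, ~~ (j%:R - K%:R - 2 <= omega w i < j%:R + 3)) /\
  (exists i, j%:R + 3 <= omega w i < j%:R + 3 + 2^-1) /\
  (forall t, (t < K)%N -> exists i, j%:R + 4 + t%:R <= omega w i < j%:R + 5 + t%:R).

Lemma Good_mono w j K K' : (K' <= K)%N -> Good w j K -> Good w j K'.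
Proof.
move=> KK [H0 [H1 H2]]; split; [|split] => //.
- move=> i; apply: contra (H0 i) => /andP[a b]; apply/andP; split => //.
  have : (K'%:R : R) <= K%:R by rewrite ler_nat.
  lra.
- by move=> t tK; apply: H2; apply: leq_trans KK.
Qed.

Lemma two_le_norm (a : R) : 2 <= a \/ 2 <= - a -> 2 <= `|a|.
Proof. by move=> [h|h]; rewrite ler_normr h ?orbT. Qed.

Lemma norm_le1 (a : R) : -1 <= a <= 1 -> `|a| <= 1.
Proof. by rewrite ler_norml. Qed.

Lemma Good_far w j K x L y i : Good w j K -> j%:R + 2^-1 <= x <= j%:R + 1 ->
  L <= K%:R -> x - L <= y -> y <= x ->
  2 <= `|y - omega w i|.
Proof.
move=> [H0 _] /andP[x1 x2] LK y1 y2; apply: two_le_norm.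
move: (H0 i); rewrite negb_and -!real_ltNge ?num_real // => /orP[h|h].
  left; lra.
right; rewrite -leNgt in h; lra.
Qed.

Lemma Good_ei w j K x L y : Good w j K -> j%:R + 2^-1 <= x <= j%:R + 1 ->
  L <= K%:R -> x - L <= y -> y <= x ->
  xi ei es chi omega w y = ei.
Proof.
move=> G hx LK y1 y2; apply: xi_ei => // i; exact: Good_far G hx LK y1 y2.
Qed.

Lemma Good_es w j K x L y : Good w j K -> j%:R + 2^-1 <= x <= j%:R + 1 ->
  L <= K%:R -> x + 2 <= y -> y <= x + L - 2 ->
  xi ei es chi omega w y = es.
Proof.
move=> [H0 [[p hp] H2]] /andP[x1 x2] LK y1 y2.
have [ylt|yge] := ltP y (j%:R + 4).
  apply: (@xi_es w y p) => //; apply: norm_le1.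
  move: hp => /andP[p1 p2]; apply/andP; split; lra.
have y0 : 0 <= y - j%:R - 4 by lra.
have /andP[t1 t2] := truncn_itv y0.
set t := Num.Def.trunc _ in t1 t2.
have tK : (t < K)%N.
  rewrite -(ltr_nat R); apply: le_lt_trans t1 _; lra.
have [q /andP[q1 q2]] := H2 t tK.
apply: (@xi_es w y q) => //; apply: norm_le1.
rewrite -natr1 in t2.
apply/andP; split; lra.
Qed.

Lemma Good_mono_xi w j K x L y z : Good w j K -> j%:R + 2^-1 <= x <= j%:R + 1 ->
  L <= K%:R -> x - L <= y -> y <= z -> z <= x + L - 2 ->
  xi ei es chi omega w y <= xi ei es chi omega w z.
Proof.
move=> G hx LK y1 yz z2.
have [zge|zlt] := leP (x + 2) z.
  by rewrite (@Good_es w j K x L z G hx LK zge z2); exact: xi_le_es.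
apply: xi_mono => // i.
move: G => [H0 _]; move/andP: hx => [x1 x2].
move: (H0 i); rewrite negb_and -!real_ltNge ?num_real // => /orP[h|h].
  have -> : chi `|y - omega w i| = 0.
    by apply: chi0; apply: two_le_norm; left; lra.
  by have /andP[] := @chi01 _ (normr_ge0 (z - omega w i)).
rewrite -leNgt in h.
rewrite (distrC y) (distrC z) !ger0_norm; try lra.
apply: chi_mono; lra.
Qed.

End Det.
Section Analytic.
Context (R : realType).

Definition qK' (K : nat) : R :=
  expR (- (K%:R + 5)) * (expR (- 2^-1) * 2^-1) * expR (-1) ^+ K.

Lemma qK'_E K : qK' K = expR (- 2^-1) ^+ (4 * K + 11) * 2^-1.
Proof.
set e := expR (- 2^-1).
have h1 : expR (- (K%:R + 5)) = e ^+ (2 * K + 10) :> R.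
  rewrite -expRM_natl; congr expR; rewrite natrD natrM /=; lra.
have h2 : expR (-1) = e ^+ 2 :> R.
  rewrite -expRM_natl; congr expR; lra.
have -> : e ^+ (4 * K + 11) = e ^+ (2 * K + 10) * e * e ^+ (2 * K).
  by rewrite -exprSr -exprD; congr (_ ^+ _); lia.
rewrite /qK' h1 h2 -exprM.
rewrite -/e; move: (e ^+ (2 * K + 10)) (e ^+ (2 * K)) => u v.
clearbody e; move: (2^-1 : R) => i; ring.
Qed.

Lemma e_ge : 2^-1 <= expR (- 2^-1) :> R.
Proof. have := expR_ge1Dx (- 2^-1 : R); lra. Qed.

Lemma qK'_gt0 K : 0 < qK' K.
Proof. by rewrite qK'_E mulr_gt0 // exprn_gt0 // expR_gt0. Qed.

Lemma qK'_le1 K : qK' K <= 1.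
Proof.
rewrite qK'_E; have h : expR (- 2^-1) ^+ (4 * K + 11) <= 1 :> R.
  apply: exprn_ile1; first exact: ltW (expR_gt0 _).
  by rewrite expR_le1; lra.
have : 0 <= expR (- 2^-1) ^+ (4 * K + 11) :> R by rewrite exprn_ge0 // ltW // expR_gt0.
nra.
Qed.

Lemma qK'_lb a : (2 ^+ 16 * 2 ^+ (4 * a))^-1 <= qK' a.+1.
Proof.
rewrite qK'_E.
have : (2^-1) ^+ (4 * a.+1 + 11) <= expR (- 2^-1) ^+ (4 * a.+1 + 11) :> R.
  apply: lerXn2r; last exact: e_ge.
  - by rewrite nnegrE.
  - by rewrite nnegrE ltW // expR_gt0.
have -> : (2 ^+ 16 * 2 ^+ (4 * a))^-1 = (2^-1) ^+ (4 * a.+1 + 11) * 2^-1 :> R.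
  rewrite -exprD -exprVn -exprSr; congr (_ ^+ _); lia.
move=> h; apply: ler_wpM2r => //; lra.
Qed.

Lemma expRN_le (y : R) : 0 < y -> expR (- y) <= 24 / y ^+ 4.
Proof.
move=> y0; have h := expR_ge1Dxn 3 (ltW y0).
have f : (4`!%:R : R) = 24 by [].
rewrite f in h.
have y4 : 0 < y ^+ 4 by rewrite exprn_gt0.
rewrite expRN -[24 / _]invf_div.
rewrite lef_pV2 ?posrE ?expR_gt0 ?divr_gt0 //.
lra.
Qed.

End Analytic.
Definition Kn (m : nat) : nat := (trunc_log 2 m %/ 16).+1.
Definition Dn (m : nat) : nat := (2 * Kn m + 6)%N.
Definition Mn (m : nat) : nat := (m %/ Dn m)%N.

Lemma nat_D8 a : (2 * a.+1 + 6 <= 8 * 2 ^ (4 * a))%N.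
Proof.
elim: a => [//|a IH].
rewrite (_ : (4 * a.+1 = 4 + 4 * a)%N); last lia.
rewrite expnD; have : (1 <= 2 ^ (4 * a))%N by rewrite expn_gt0.
move: IH; set z := (2 ^ (4 * a))%N => IH z1.
have -> : (2 ^ 4 = 16)%N by [].
lia.
Qed.

Section Bound.
Context (R : realType).

Lemma u_bound m : (1 <= m)%N ->
  (1 - qK' R (Kn m)) ^+ Mn m <= 24 * 2 ^+ 80 / (m%:R ^+ 2).
Proof.
move=> m1.
set a := (trunc_log 2 m %/ 16)%N.
set X : R := 2 ^+ (4 * a).
set q := qK' R (Kn m).
set M := Mn m.
have X1 : 1 <= X by apply: exprn_ege1; lra.
have X4 : X ^+ 4 <= m%:R.
  rewrite /X -exprM -natrX ler_nat.
  apply: leq_trans (trunc_logP (isT : (1 < 2)%N) m1).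
  apply: leq_pexp2l => //.
  have := leq_trunc_div (trunc_log 2 m) 16; rewrite -/a; lia.
have qlb : (2 ^+ 16 * X)^-1 <= q by exact: qK'_lb.
have q0 : 0 < q by exact: qK'_gt0.
have q1 : q <= 1 by exact: qK'_le1.
have D8 : (Dn m)%:R <= 8 * X.
  have := nat_D8 a; rewrite -(ler_nat R) natrM natrX /= => h.
  by apply: le_trans h _.
have P80 : (1 : R) <= 2 ^+ 80 by apply: exprn_ege1; lra.
have m0 : (0 : R) < m%:R by rewrite ltr0n.
have u1 : (1 - q) ^+ M <= 1 by apply: exprn_ile1; lra.
have u0 : 0 <= (1 - q) ^+ M by apply: exprn_ge0; lra.
case: (leqP (2 * Dn m) m) => hm.
- have D0 : (0 < Dn m)%N by rewrite /Dn addn_gt0 orbT.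
  have hc := ltn_ceil m D0.
  rewrite -(ltr_nat R) natrM -natr1 -/M in hc.
  rewrite -(ler_nat R) natrM in hm.
  set D : R := (Dn m)%:R in hc hm D8.
  rewrite -[(m %/ Dn m)%N]/M in hc.
  have MD : m%:R <= M%:R * D * 2 by nra.
  have M0 : (0 : R) <= M%:R by [].
  have M16 : m%:R <= M%:R * (16 * X).
    have : M%:R * D <= M%:R * (8 * X) by apply: ler_wpM2l.
    nra.
  have Xpos : 0 < X by lra.
  have qX : 1 <= q * (2 ^+ 16 * X).
    have h2 : 0 < 2 ^+ 16 * X :> R by rewrite mulr_gt0 // exprn_gt0.
    by rewrite -(ler_pdivrMr _ _ h2) mul1r.
  set y := M%:R * q.
  set Z : R := 2 ^+ 20 * X ^+ 2.
  have yZ : m%:R <= y * Z.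
    have -> : y * Z = (M%:R * (16 * X)) * (q * (2 ^+ 16 * X)).
      rewrite /y /Z (_ : 2 ^+ 20 = 2 ^+ 4 * 2 ^+ 16 :> R); last by rewrite -exprD.
      rewrite (_ : 2 ^+ 4 = 16 :> R); last by rewrite !exprS expr0; lra.
      ring.
    have h0 : 0 <= M%:R * (16 * X) by nra.
    nra.
  have y0 : 0 < y.
    have : 0 < y * Z by lra.
    have Z0 : 0 < Z by rewrite /Z mulr_gt0 // ?exprn_gt0 //; lra.
    by rewrite pmulr_lgt0.
  have ue : (1 - q) ^+ M <= expR (- y).
    rewrite /y -(mulrN (M%:R) q) expRM_natl.
    apply: lerXn2r; rewrite ?nnegrE; try lra.
      exact: ltW (expR_gt0 _).
    have := expR_ge1Dx (- q); lra.
  apply: (le_trans ue); apply: (le_trans (@expRN_le R y y0)).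
  have Z4 : Z ^+ 4 <= 2 ^+ 80 * m%:R ^+ 2.
    rewrite /Z exprMn -exprM /= (_ : 2 ^+ 80 = 2 ^+ 80 :> R) //.
    apply: ler_wpM2l; first by apply: exprn_ge0.
    rewrite -exprM (_ : (2 * 4 = 4 * 2)%N) // exprM.
    apply: lerXn2r; [rewrite nnegrE; apply: exprn_ge0; lra|rewrite nnegrE; lra|exact: X4].
  have m4 : m%:R ^+ 4 <= y ^+ 4 * Z ^+ 4.
    rewrite -exprMn; apply: lerXn2r; rewrite ?nnegrE //; lra.
  have y4 : 0 < y ^+ 4 by apply: exprn_gt0.
  have m2 : 0 < m%:R ^+ 2 :> R by apply: exprn_gt0.
  rewrite ler_pdivrMr // mulrAC ler_pdivlMr //.
  have : m%:R ^+ 4 <= y ^+ 4 * (2 ^+ 80 * m%:R ^+ 2).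
    apply: le_trans m4 _; apply: ler_wpM2l => //; exact: ltW.
  rewrite (_ : m%:R ^+ 4 = m%:R ^+ 2 * m%:R ^+ 2 :> R); last by rewrite -exprD.
  move=> h; nra.
- apply: le_trans u1 _.
  rewrite ler_pdivlMr ?exprn_gt0 // mul1r.
  rewrite -(ltr_nat R) natrM in hm.
  have hm' : m%:R < 16 * X.
    apply: lt_le_trans hm _; rewrite (_ : (2%:R : R) = 2) //; lra.
  have X3 : X ^+ 4 < 16 * X by lra.
  have X16 : X < 16.
    have : X * X <= X ^+ 3.
      rewrite (_ : X ^+ 3 = X * X * X); last by rewrite !exprS expr0 mulr1 mulrA.
      rewrite -{1}(mulr1 (X * X)); apply: ler_wpM2l; nra.
    rewrite (_ : X ^+ 4 = X ^+ 3 * X) in X3; last by rewrite exprSr.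
    nra.
  have m256 : m%:R < 256 :> R by lra.
  have h8 : (256 : R) = 2 ^+ 8 by rewrite !exprS expr0; lra.
  have hm2 : m%:R ^+ 2 <= (2 ^+ 8) ^+ 2 :> R.
    apply: lerXn2r; [rewrite nnegrE; lra|by rewrite nnegrE exprn_ge0|lra].
  rewrite -exprM in hm2.
  apply: le_trans hm2 _.
  have : (2 : R) ^+ (8 * 2) <= 2 ^+ 80.
    rewrite -(subnKC (isT : (8 * 2 <= 80)%N)) exprD.
    rewrite -{1}(mulr1 (2 ^+ (8 * 2))); apply: ler_wpM2l; first exact: exprn_ge0.
    by apply: exprn_ege1; lra.
  lra.
Qed.

End Bound.
Section Summ.
Context (R : realType).

Definition Bc : R := 24 * 2 ^+ 80.
Definition vv (n : nat) : R :=
  if n is 0%N then 1 else 2 * Bc * (n%:R^-1 - n.+1%:R^-1).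

Lemma Bc_gt0 : 0 < Bc.
Proof. by rewrite /Bc mulr_gt0 // exprn_gt0. Qed.

Lemma vv_ge0 n : 0 <= vv n.
Proof.
case: n => [|n] //=; apply: mulr_ge0; first by have := Bc_gt0; lra.
rewrite subr_ge0 lef_pV2 ?posrE ?ltr0n // ler_nat; exact: leqnSn.
Qed.

Lemma vv_sum N : \sum_(0 <= k < N.+1) vv k = 1 + 2 * Bc * (1 - N.+1%:R^-1).
Proof.
elim: N => [|N IH]; first by rewrite big_nat1 /= invr1 subrr mulr0 addr0.
rewrite big_nat_recr //= IH.
move: (N.+1%:R^-1) (N.+2%:R^-1) => a b.
rewrite /Bc; move: (2 ^+ 80 : R) => c.
ring.
Qed.

Lemma vv_sum_le N : \sum_(0 <= k < N) vv k <= 1 + 2 * Bc.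
Proof.
case: N => [|N]; first by rewrite big_geq //; have := Bc_gt0; lra.
rewrite vv_sum; have := Bc_gt0 => B0.
have : 0 <= Bc * N.+1%:R^-1 :> R by rewrite mulr_ge0 ?invr_ge0 //; lra.
move: (N.+1%:R^-1 : R) => a h; lra.
Qed.

Lemma u_vv m : (1 - qK' R (Kn m)) ^+ Mn m <= vv m.
Proof.
case: m => [|m].
  by rewrite /Mn div0n expr0.
apply: le_trans (@u_bound R m.+1 isT) _.
rewrite /vv -/Bc.
have B0 := Bc_gt0.
have n0 : 0 < m.+1%:R :> R by rewrite ltr0n.
have h1 : (m.+1%:R : R) = m%:R + 1 by rewrite natr1.
have h2 : (m.+2%:R : R) = m%:R + 2 by rewrite -natr1 h1; lra.
rewrite h1 h2.
have : (0 : R) <= m%:R by [].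
move: (m%:R : R) => x hx.
rewrite -subr_ge0.
have -> : 2 * Bc * ((x + 1)^-1 - (x + 2)^-1) - Bc / (x + 1) ^+ 2 =
    Bc * x / ((x + 1) ^+ 2 * (x + 2)).
  by field; apply/andP; split; apply: lt0r_neq0; lra.
apply: divr_ge0; first by apply: mulr_ge0 => //; lra.
by apply: mulr_ge0; [apply: exprn_ge0|]; lra.
Qed.

End Summ.

Section Prob.
Context (R : realType) (d : measure_display) (T : measurableType d)
  (P : probability T R) (omega : T -> int -> R).
Hypothesis momega : forall i : int, measurable_fun setT (fun w => omega w i).

Definition cnt (A : set R) (k : nat) : set T := [set w | count_eq omega w A k].

Lemma pre_meas (A : set R) i : measurable A -> measurable [set w | A (omega w i)].
Proof.
move=> mA; have := momega i measurableT _ mA; rewrite setTI.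
by congr measurable.
Qed.

Lemma cnt_measurable A k : measurable A -> measurable (cnt A k).
Proof.
move=> mA.
have -> : cnt A k = \bigcup_(s : seq int)
    (if uniq s && (size s == k) then
       ~` \bigcup_(i : int) ~` (if i \in s then [set w | A (omega w i)]
                               else ~` [set w | A (omega w i)])
     else set0).
  apply/seteqP; split => w.
    move=> [s [us [ss H]]]; exists s => //.
    rewrite us ss eqxx /= => -[i _]; apply.
    case: ifP => /= ins; [exact/H|move=> /H; rewrite ins].
    by [].
  move=> [s _]; case: ifP => // /andP[us /eqP ss] H.
  exists s; split => //; split => // i.
  have {}H : (if i \in s then [set w | A (omega w i)]
              else ~` [set w | A (omega w i)]) w.
    by apply: contrapT => Hn; apply: H; exists i.
  split => [Ai|ins]; last by rewrite ins in H.
  by case: ifP H => // _ /=; apply.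
apply: countable_bigcupT_measurable; first exact: countableP.
move=> s; case: ifP => _ //.
apply: measurableC; apply: countable_bigcupT_measurable; first exact: countableP.
move=> i; apply: measurableC; case: ifP => _; last apply: measurableC;
  exact: pre_meas.
Qed.

Local Notation d0 := ((set0 : set R), 0%N).

Definition ev (l : seq (set R * nat)) : set T :=
  [set w | forall p, List.In p l -> count_eq omega w p.1 p.2].

Definition fpo (p : set R * nat) : R :=
  let l := fine (lebesgue_measure p.1) in expR (- l) * l ^+ p.2 / (p.2)`!%:R.

Definition wt (l : seq (set R * nat)) : R := \prod_(p <- l) fpo p.

Fixpoint ldisj (l : seq (set R * nat)) : Prop :=
  match l with
  | [::] => True
  | p :: l' => (forall q, List.In q l' -> p.1 `&` q.1 = set0) /\ ldisj l'
  end.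

Definition lok (l : seq (set R * nat)) : Prop :=
  forall p, List.In p l -> measurable p.1 /\ bounded_real_set p.1.

Lemma In_nthE (l : seq (set R * nat)) p :
  List.In p l -> exists j, (j < size l)%N /\ nth d0 l j = p.
Proof.
elim: l => //= a l IH [->|/IH [j [jl <-]]]; first by exists 0%N.
by exists j.+1.
Qed.

Lemma nth_In (l : seq (set R * nat)) j : (j < size l)%N -> List.In (nth d0 l j) l.
Proof.
elim: l j => //= a l IH [|j] /=; first by left.
by move=> jl; right; apply: IH.
Qed.

Lemma ldisj_nth l : ldisj l -> forall i j, (i < size l)%N -> (j < size l)%N -> i <> j ->
  (nth d0 l i).1 `&` (nth d0 l j).1 = set0.
Proof.
elim: l => //= p l IH [Hp Hl] [|i] [|j] //= il jl ij.
- by apply: Hp; apply: nth_In.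
- by rewrite setIC; apply: Hp; apply: nth_In.
- by apply: IH => // h; apply: ij; rewrite h.
Qed.

Lemma In_catP (l1 l2 : seq (set R * nat)) p :
  List.In p (l1 ++ l2) <-> List.In p l1 \/ List.In p l2.
Proof. by elim: l1 => [|a l1 IH] /=; tauto. Qed.

Lemma ldisj_cat l1 l2 : ldisj l1 -> ldisj l2 ->
  (forall p q, List.In p l1 -> List.In q l2 -> p.1 `&` q.1 = set0) ->
  ldisj (l1 ++ l2).
Proof.
elim: l1 => //= p l1 IH [Hp H1] H2 Hx; split.
  move=> q hq; case: ((In_catP _ _ _).1 hq); first exact: Hp.
  by apply: Hx; left.
by apply: IH => // p' q hp hq; apply: Hx => //; right.
Qed.

Lemma ev_cat l1 l2 : ev (l1 ++ l2) = ev l1 `&` ev l2.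
Proof.
apply/seteqP; split => w /=.
  by move=> H; split => p hp; apply: H; apply/In_catP; [left|right].
by move=> [H1 H2] p hp; case: ((In_catP _ _ _).1 hp); [apply: H1|apply: H2].
Qed.

Lemma wt_cat l1 l2 : wt (l1 ++ l2) = wt l1 * wt l2.
Proof. by rewrite /wt big_cat. Qed.


Lemma ev_measurable l : lok l -> measurable (ev l).
Proof.
elim: l => [|p l IH] H.
  by have -> : ev [::] = setT by apply/seteqP; split => // w _ p.
have -> : ev (p :: l) = cnt p.1 p.2 `&` ev l.
  apply/seteqP; split => w /=.
    by move=> Hw; split; [apply: Hw; left|move=> q hq; apply: Hw; right].
  by move=> [h1 h2] q [<-|hq] //; apply: h2.
apply: measurableI; first by apply: cnt_measurable => //; have [] := H p (or_introl erefl).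
by apply: IH => q hq; apply: H; right.
Qed.

Hypothesis PPP : poisson_point_process P omega.

Lemma ev_prob l : lok l -> ldisj l -> P (ev l) = (wt l)%:E.
Proof.
move=> ok dj; have [_ H] := PPP.
have E : \bigcap_(j in [set j | (j < size l)%N])
   [set w | count_eq omega w (nth d0 l j).1 (nth d0 l j).2] = ev l.
  apply/seteqP; split => w /=.
    move=> Hw p /In_nthE [j [jl <-]]; exact: Hw.
  by move=> Hw j /= jl; apply: Hw; apply: nth_In.
rewrite -E H.
- rewrite /wt (big_nth d0) big_mkord -prodEFin.
  by apply: eq_bigr.
- by move=> j jl; apply: ok; apply: nth_In.
- by move=> j j' jl j'l jj'; apply: ldisj_nth.
Qed.

Definition itv (a b : R) : set R := [set` `[a, b[ ].

Fixpoint cells (j K : nat) : seq (set R * nat) :=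
  match K with
  | 0%N => [::]
  | K'.+1 => (itv (j%:R + 4 + K'%:R) (j%:R + 5 + K'%:R), 1%N) :: cells j K'
  end.

Definition pat (j K : nat) : seq (set R * nat) :=
  (itv (j%:R - K%:R - 2) (j%:R + 3), 0%N) ::
  (itv (j%:R + 3) (j%:R + 3 + 2^-1), 1%N) :: cells j K.

Definition reg (j K : nat) : set R := itv (j%:R - K%:R - 2) (j%:R + K%:R + 4).

Lemma itvE a b x : itv a b x = (a <= x < b).
Proof. by rewrite /itv /= in_itv /=. Qed.

Lemma itv_meas a b : measurable (itv a b).
Proof. exact: measurable_itv. Qed.

Lemma itv_bounded a b : bounded_real_set (itv a b).
Proof.
exists (`|a| + `|b|) => x; rewrite itvE => /andP[h1 h2].
rewrite ler_norml; apply/andP; split.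
  have := ler_norm (- a); rewrite normrN; have := normr_ge0 b; lra.
have := ler_norm b; have := normr_ge0 a; lra.
Qed.

Lemma itv_disj a b c e : b <= c \/ e <= a -> itv a b `&` itv c e = set0.
Proof.
move=> H; apply/seteqP; split => // x [] /=; rewrite !itvE => /andP[h1 h2] /andP[h3 h4].
case: H => H; lra.
Qed.

Lemma itv_sub a b c e : c <= a -> b <= e -> itv a b `<=` itv c e.
Proof. by move=> h1 h2 x; rewrite !itvE => /andP[h3 h4]; apply/andP; split; lra. Qed.

Lemma cells_In j K p : List.In p (cells j K) ->
  exists t, (t < K)%N /\ p = (itv (j%:R + 4 + t%:R) (j%:R + 5 + t%:R), 1%N).
Proof.
elim: K => //= K IH [<-|/IH [t [tK ->]]]; first by exists K.
by exists t; split => //; apply: ltnW.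
Qed.

Lemma pat_In j K p : List.In p (pat j K) ->
  p = (itv (j%:R - K%:R - 2) (j%:R + 3), 0%N) \/
  p = (itv (j%:R + 3) (j%:R + 3 + 2^-1), 1%N) \/
  exists t, (t < K)%N /\ p = (itv (j%:R + 4 + t%:R) (j%:R + 5 + t%:R), 1%N).
Proof. by move=> [<-|[<-|/cells_In]]; [left|right; left|right; right]. Qed.

Lemma pat_lok j K : lok (pat j K).
Proof.
move=> p /pat_In [->|[->|[t [_ ->]]]]; split; (exact: itv_meas || exact: itv_bounded).
Qed.

Lemma pat_reg j K p : List.In p (pat j K) -> p.1 `<=` reg j K.
Proof.
have tK t : (t < K)%N -> (t%:R : R) + 1 <= K%:R.
  by move=> h; rewrite natr1 ler_nat.
have K0 : (0 : R) <= K%:R by [].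
move=> /pat_In [->|[->|[t [/tK h ->]]]] /=; rewrite /reg.
- apply: itv_sub; lra.
- apply: itv_sub; lra.
- apply: itv_sub.
  + have : (0:R) <= t%:R by []. lra.
  + lra.
Qed.

Lemma cells_ldisj j K : ldisj (cells j K).
Proof.
elim: K => //= K IH; split => // q /cells_In [t [tK ->]] /=.
apply: itv_disj; right.
have : (t%:R : R) + 1 <= K%:R by rewrite natr1 ler_nat.
lra.
Qed.

Lemma pat_ldisj j K : ldisj (pat j K).
Proof.
have K0 : (0 : R) <= K%:R by [].
split; [|split; [|exact: cells_ldisj]].
- move=> q [<-|/cells_In [t [_ ->]]] /=; apply: itv_disj; left => //.
  have : (0 : R) <= t%:R by []. lra.
- move=> q /cells_In [t [_ ->]] /=; apply: itv_disj; left.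
  have : (0 : R) <= t%:R by []. lra.
Qed.

Lemma count0 w A : count_eq omega w A 0 -> forall i, ~ A (omega w i).
Proof. by move=> [s [_ [/size0nil -> H]]] i /H. Qed.

Lemma count1 w A : count_eq omega w A 1 -> exists i, A (omega w i).
Proof.
move=> [[|i [|? ?]] [_ [//= _ H]]]; exists i; apply/H.
by rewrite inE.
Qed.

Lemma ev_pat_Good w j K : ev (pat j K) w -> @Good R T omega w j K.
Proof.
move=> H; split; [|split].
- move=> i; apply/negP => hi.
  have := H _ (or_introl erefl) => /= /count0 /(_ i); apply.
  by rewrite itvE.
- have := H _ (or_intror (or_introl erefl)) => /= /count1 [i hi].
  by exists i; rewrite -itvE.
- move=> t tK.
  have : List.In (itv (j%:R + 4 + t%:R) (j%:R + 5 + t%:R), 1%N) (pat j K).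
    right; right; elim: K tK {H} => //= K IH.
    rewrite ltnS leq_eqVlt => /orP[/eqP ->|/IH]; by [left|right].
  move=> /H /count1 [i hi]; by exists i; rewrite -itvE.
Qed.

Lemma fpo_itv a b k : a < b ->
  fpo (itv a b, k) = expR (- (b - a)) * (b - a) ^+ k / k`!%:R.
Proof.
move=> ab; rewrite /fpo /= /itv lebesgue_measure_itv /=.
by rewrite lte_fin ab /=.
Qed.

Definition qK (K : nat) : R :=
  expR (- (K%:R + 5)) * (expR (- 2^-1) * 2^-1) * expR (-1) ^+ K.

Lemma wt_cells j K : wt (cells j K) = expR (-1) ^+ K.
Proof.
elim: K => [|K IH]; first by rewrite /wt big_nil.
rewrite /wt /= big_cons -/(wt _) IH fpo_itv; last lra.
rewrite [RHS]exprS; congr (_ * _).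
have -> : j%:R + 5 + K%:R - (j%:R + 4 + K%:R) = 1 :> R by lra.
by rewrite expr1 /= divr1 mulr1.
Qed.

Lemma wt_pat j K : wt (pat j K) = qK K.
Proof.
have K0 : (0 : R) <= K%:R by [].
rewrite /wt /pat !big_cons -/(wt _) wt_cells !fpo_itv; try lra.
rewrite /qK mulrA; congr (_ * _ * _).
  have -> : j%:R + 3 - (j%:R - K%:R - 2) = K%:R + 5 :> R by lra.
  by rewrite expr0 mulr1 divr1.
have -> : j%:R + 3 + 2^-1 - (j%:R + 3) = 2^-1 :> R by lra.
by rewrite expr1 divr1.
Qed.

Fixpoint NE (js : seq nat) (K : nat) : set T :=
  match js with
  | [::] => setT
  | j :: js' => ~` ev (pat j K) `&` NE js' K
  end.

Definition sepr (K : nat) : rel nat :=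
  fun j j' => ((j + (2 * K + 6) <= j') || (j' + (2 * K + 6) <= j))%N.

Lemma reg_disj K j j' : sepr K j j' -> reg j K `&` reg j' K = set0.
Proof.
rewrite /reg => /orP[h|h]; apply: itv_disj; [left|right];
  move: h; rewrite -(ler_nat R) !natrD => h; lra.
Qed.

Lemma NE_meas js K : measurable (NE js K).
Proof.
elim: js => [|j js IH] /=; first exact: measurableT.
apply: measurableI => //; apply: measurableC; apply: ev_measurable.
exact: pat_lok.
Qed.

Lemma fin_P (A : set T) : measurable A -> (P A < +oo)%E.
Proof.
move=> mA; apply: (le_lt_trans (probability_le1 P mA)); exact: ltry.
Qed.

Lemma indep K js : forall G, lok G -> ldisj G ->
  (forall p, List.In p G -> forall j, j \in js -> p.1 `&` reg j K = set0) ->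
  pairwise (sepr K) js ->
  P (ev G `&` NE js K) = (wt G * (1 - qK K) ^+ size js)%:E.
Proof.
elim: js => [|j js IH] G okG djG HG sep.
  by rewrite /= setIT ev_prob // expr0 mulr1.
move: sep; rewrite pairwise_cons => /andP[/allP sepj sep].
have E1 : ev G `&` NE (j :: js) K = (ev G `&` NE js K) `\` ev (pat j K).
  apply/seteqP; split => w /=.
    by move=> [h1 [h2 h3]].
  by move=> [[h1 h3] h2].
have mG : measurable (ev G) by exact: ev_measurable.
have mp : measurable (ev (pat j K)) by apply: ev_measurable; exact: pat_lok.
have mX : measurable (ev G `&` NE js K) by apply: measurableI => //; exact: NE_meas.
rewrite E1 measureD //; last exact: fin_P.
have E2 : ev G `&` NE js K `&` ev (pat j K) = ev (pat j K ++ G) `&` NE js K.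
  rewrite ev_cat; apply/seteqP; split => w /=.
    by move=> [[h1 h2] h3].
  by move=> [[h1 h2] h3].
rewrite E2.
change (P (ev G `&` NE js K) - P (ev (pat j K ++ G) `&` NE js K) =
  (wt G * (1 - qK K) ^+ size (j :: js))%:E)%E.
rewrite (IH G) //; last first.
  move=> p hp j' j'js; apply: HG => //; by rewrite inE j'js orbT.
rewrite (IH (pat j K ++ G)) //.
- rewrite wt_cat wt_pat -EFinB /=; congr EFin.
  rewrite exprS; ring.
- move=> p hp; case: ((In_catP _ _ _).1 hp); first exact: pat_lok.
  exact: okG.
- apply: ldisj_cat => //; first exact: pat_ldisj.
  move=> p q hp hq; apply/seteqP; split => // x [px qx].
  have := HG q hq j (mem_head _ _).
  move=> /seteqP [+ _] => /(_ x); apply; split => //.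
  by apply: (pat_reg _ _ _ hp).
- move=> p hp j' j'js; case: ((In_catP _ _ _).1 hp) => hp'.
    apply/seteqP; split => // x [px rx].
    have := @reg_disj K j j' (sepj j' j'js) => /seteqP [+ _] => /(_ x); apply; split => //.
    by apply: (pat_reg _ _ _ hp').
  by apply: HG => //; rewrite inE j'js orbT.
Qed.

Definition wins (m : nat) : seq nat := [seq (m + Dn m * t)%N | t <- iota 0 (Mn m)].

Lemma pairwise_ap K a s n :
  pairwise (sepr K) [seq (a + (2 * K + 6) * t)%N | t <- iota s n].
Proof.
elim: n s => [//|n IH] s.
rewrite (_ : iota s n.+1 = s :: iota s.+1 n) // map_cons pairwise_cons IH andbT.
apply/allP => x /mapP [t]; rewrite mem_iota => /andP[h1 h2] ->.
apply/orP; left; rewrite /sepr.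
have : (s.+1 <= t)%N by []. nia.
Qed.

Lemma wins_pairwise m : pairwise (sepr (Kn m)) (wins m).
Proof. exact: pairwise_ap. Qed.

Lemma wins_range m j : j \in wins m -> (m <= j)%N /\ (j.+1 <= 2 * m)%N.
Proof.
move=> /mapP [t]; rewrite mem_iota add0n => /andP[_ tM] ->.
have D0 : (0 < Dn m)%N by rewrite /Dn addn_gt0 orbT.
move: tM; rewrite /Mn leq_divRL // => h.
have : (1 <= Dn m)%N by [].
split; [lia|nia].
Qed.

Definition Fm (m : nat) : set T := NE (wins m) (Kn m).

Lemma Fm_meas m : measurable (Fm m).
Proof. exact: NE_meas. Qed.

Lemma P_Fm m : P (Fm m) = ((1 - qK (Kn m)) ^+ Mn m)%:E.
Proof.
have := @indep (Kn m) (wins m) [::].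
have -> : ev [::] = setT by apply/seteqP; split => // w _ p.
rewrite setTI /wt big_nil mul1r size_map size_iota; apply => //.
exact: wins_pairwise.
Qed.

Lemma NE_notin js K w : ~ NE js K w -> exists j, j \in js /\ ev (pat j K) w.
Proof.
elim: js => [|j js IH] /=; first by [].
move=> H; have [hj|hj] := pselect (ev (pat j K) w).
  by exists j; rewrite mem_head.
have [j' [h1 h2]] : exists j', j' \in js /\ ev (pat j' K) w.
  by apply: IH => hn; apply: H; split.
by exists j'; rewrite inE h1 orbT.
Qed.

Lemma not_Fm m w : ~ Fm m w -> exists j, [/\ (m <= j)%N, (j.+1 <= 2 * m)%N & @Good R T omega w j (Kn m)].
Proof.
move=> /NE_notin [j [jw ev]]; have [h1 h2] := @wins_range m j jw.
by exists j; split => //; apply: (@ev_pat_Good w j (Kn m)).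
Qed.

Local Open Scope ereal_scope.
Lemma sum_Fm : \sum_(n <oo) P (Fm n) < +oo.
Proof.
apply: (le_lt_trans (y := \sum_(n <oo) (vv R n)%:E)).
  apply: lee_nneseries => [i _ _|n _]; first exact: measure_ge0.
  rewrite P_Fm lee_fin; exact: u_vv.
apply: (le_lt_trans (y := (1 + 2 * Bc R)%:E)); last exact: ltry.
apply: lime_le; first by apply: is_cvg_nneseries => n _ _; rewrite lee_fin vv_ge0.
by apply: nearW => N; rewrite sumEFin lee_fin; exact: vv_sum_le.
Qed.

Local Close Scope ereal_scope.
Lemma limsup_null : P (lim_sup_set Fm) = 0%E.
Proof. exact: lim_sup_set_cvg0 Fm_meas sum_Fm. Qed.

Lemma limsup_meas : measurable (lim_sup_set Fm).
Proof.
apply: bigcapT_measurable => n; apply: bigcup_measurable => k _; exact: Fm_meas.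
Qed.

Lemma eventually_good w : ~ lim_sup_set Fm w -> exists N, (1 <= N)%N /\
  forall m, (N <= m)%N -> exists j, [/\ (m <= j)%N, (j.+1 <= 2 * m)%N & @Good R T omega w j (Kn m)].
Proof.
move=> H.
have [n Hn] : exists n, ~ (\bigcup_(j in [set j | (n <= j)%N]) Fm j) w.
  apply: contrapT => Hc; apply: H => n _.
  by apply: contrapT => Hn; apply: Hc; exists n.
exists n.+1; split => // m nm; apply: not_Fm => Fmw; apply: Hn; exists m => //=.
exact: ltnW.
Qed.

End Prob.
Section Construct.
Context (R : realType) (ei es : R) (chi : R -> R) (T : Type) (omega : T -> int -> R).
Hypothesis ei_lt_es : ei < es.
Hypothesis chi01 : forall x, 0 <= x -> 0 <= chi x <= 1.
Hypothesis chi_mono : forall x y, 0 <= x -> x <= y -> chi y <= chi x.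
Hypothesis chi1 : forall x, 0 <= x -> x <= 1 -> chi x = 1.
Hypothesis chi0 : forall x, 2 <= x -> chi x = 0.

Definition cc0 : R := (32 * ln 2)^-1.

Lemma ln2_gt0 : 0 < ln (2 : R).
Proof. by apply: ln_gt0; lra. Qed.

Lemma cc0_gt0 : 0 < cc0.
Proof. by rewrite /cc0 invr_gt0 mulr_gt0 // ln2_gt0. Qed.

Lemma Kn_mono m m' : (m <= m')%N -> (Kn m <= Kn m')%N.
Proof. by move=> h; rewrite /Kn ltnS leq_div2r // leq_trunc_log. Qed.

Lemma L_le_K n : (1 <= n)%N -> 2 * cc0 * ln n%:R <= (Kn n)%:R.
Proof.
move=> n1; set tl := trunc_log 2 n.
have l2 := ln2_gt0.
have hn : (n < 2 ^ tl.+1)%N := trunc_log_ltn n (isT : (1 < 2)%N).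
have lnb : ln (n%:R : R) < ln 2 * tl.+1%:R.
  rewrite mulr_natr -lnXn //.
  rewrite ltr_ln ?posrE ?exprn_gt0 ?ltr0n //.
  by rewrite -natrX ltr_nat.
have hk : (tl.+1 <= 16 * Kn n)%N.
  have := ltn_ceil tl (isT : (0 < 16)%N); rewrite /Kn -/tl; lia.
have hk' : (tl.+1%:R : R) <= 16 * (Kn n)%:R.
  by rewrite -(ler_nat R) natrM in hk.
have e : 2 * cc0 = (16 * ln 2)^-1.
  by rewrite /cc0; field; apply: lt0r_neq0.
rewrite e mulrC ler_pdivrMr ?mulr_gt0 //.
have : ln (2 : R) * tl.+1%:R <= ln 2 * (16 * (Kn n)%:R) by apply: ler_wpM2l => //; exact: ltW.
lra.
Qed.

Lemma construct (w : T) (N : nat) : (1 <= N)%N ->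
  (forall m, (N <= m)%N -> exists j, [/\ (m <= j)%N, (j.+1 <= 2 * m)%N & @Good R T omega w j (Kn m)]) ->
  exists xs : nat -> R,
      (forall n m, (n < m)%N -> xs n < xs m) /\
      xs @ \oo --> +oo /\
      (forall n : nat, (0 < n)%N ->
         (forall x, xs n - 2 * cc0 * ln n%:R <= x <= xs n ->
            xi ei es chi omega w x = ei) /\
         (forall x, xs n + 2 <= x <= xs n + 2 * cc0 * ln n%:R - 2 ->
            xi ei es chi omega w x = es) /\
         (forall x y, xs n - 2 * cc0 * ln n%:R <= x -> x <= y ->
            y <= xs n + 2 * cc0 * ln n%:R - 2 ->
            xi ei es chi omega w x <= xi ei es chi omega w y)) /\
      (1%:E <= limn_einf (fun n => (xs n / n%:R)%:E))%E /\
      (limn_einf (fun n => (xs n / n%:R)%:E) <=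
         limn_esup (fun n => (xs n / n%:R)%:E))%E /\
      (limn_esup (fun n => (xs n / n%:R)%:E) <= 2%:E)%E.
Proof.
move=> N1 H.
have ex m : exists j, (m <= j)%N && `[< @Good R T omega w j (Kn m) >].
  have [j [h1 h2 h3]] := H (maxn N m) (leq_maxl _ _).
  exists j; apply/andP; split; first exact: leq_trans (leq_maxr N m) h1.
  apply/asboolP; apply: Good_mono h3; apply: Kn_mono; exact: leq_maxr.
pose xt m := ex_minn (ex m).
have xtP m : (m <= xt m)%N /\ @Good R T omega w (xt m) (Kn m).
  rewrite /xt; case: ex_minnP => j /andP[h1 /asboolP h2] _; by split.
have xtmin m j : (m <= j)%N -> @Good R T omega w j (Kn m) -> (xt m <= j)%N.
  move=> h1 h2; rewrite /xt; case: ex_minnP => k _; apply.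
  by rewrite h1; apply/asboolP.
have xtS m : (xt m <= xt m.+1)%N.
  have [h1 h2] := xtP m.+1; apply: xtmin; first exact: ltnW.
  by apply: Good_mono h2; apply: Kn_mono.
have xt2 m : (N <= m)%N -> ((xt m).+1 <= 2 * m)%N.
  move=> Nm; have [j [h1 h2 h3]] := H m Nm.
  by apply: leq_ltn_trans h2; apply: xtmin.
pose xs m : R := (xt m)%:R + 1 - (m.+2%:R)^-1.
have inv_b m : 0 < (m.+2%:R : R)^-1 <= 2^-1.
  rewrite invr_gt0 ltr0n /= lef_pV2 ?posrE ?ltr0n // ler_nat.
  by [].
have hx m : (xt m)%:R + 2^-1 <= xs m <= (xt m)%:R + 1.
  have /andP[a b] := inv_b m; rewrite /xs.
  set t := (m.+2%:R : R)^-1 in a b *; clearbody t.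
  apply/andP; split; lra.
have xsS m : xs m < xs m.+1.
  have /andP[a b] := hx m; have /andP[c e] := hx m.+1.
  have := xtS m; rewrite leq_eqVlt => /orP[/eqP h|h].
    rewrite /xs h ltrD2l ltrN2 ltf_pV2 ?posrE ?ltr0n // ltr_nat.
    by [].
  have : ((xt m).+1%:R : R) <= (xt m.+1)%:R by rewrite ler_nat.
  rewrite -natr1 => f.
  have /andP[g _] := inv_b m.
  have /andP[g' _] := inv_b m.+1.
  rewrite /xs in a b c e *.
  set t := (m.+2%:R : R)^-1 in a b g *; set t' := (m.+3%:R : R)^-1 in c e g' *.
  clearbody t t'; lra.
have xs_mono n m : (n < m)%N -> xs n < xs m.
  elim: m => // m IH; rewrite ltnS leq_eqVlt => /orP[/eqP ->|h].
    exact: xsS.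
  by apply: lt_trans (IH h) _; exact: xsS.
have xs_ge m : (m%:R : R) <= xs m.
  have /andP[a _] := hx m; have := (xtP m).1; rewrite -(ler_nat R) => h; lra.
have xs_le m : (N <= m)%N -> xs m <= (2 * m)%N%:R.
  move=> Nm; have /andP[_ a] := hx m; have := xt2 m Nm.
  rewrite -(ler_nat R) -natr1 => h; lra.
exists xs; split; first exact: xs_mono.
split.
  apply: (@ger_cvgy _ _ _ _ (fun n : nat => n%:R)); last exact: cvgr_idn.
  by apply: nearW => n; exact: xs_ge.
split.
  move=> n n0; have [_ G] := xtP n; have LK := @L_le_K n n0; have hxn := hx n.
  split; [|split].
  - by move=> x /andP[h1 h2]; exact: (@Good_ei R ei es chi T omega chi0 w (xt n) (Kn n) (xs n) _ x G hxn LK h1 h2).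
  - by move=> x /andP[h1 h2]; exact: (@Good_es R ei es chi T omega chi01 chi1 w (xt n) (Kn n) (xs n) _ x G hxn LK h1 h2).
  - by move=> x y h1 h2 h3; exact: (@Good_mono_xi R ei es chi T omega ei_lt_es chi01 chi_mono chi1 chi0 w (xt n) (Kn n) (xs n) _ x y G hxn LK h1 h2 h3).
have r1 n : (N <= n)%N -> (1 <= xs n / n%:R).
  move=> Nn; have n0 : (0 : R) < n%:R by rewrite ltr0n; exact: leq_trans N1 Nn.
  by rewrite ler_pdivlMr // mul1r.
have r2 n : (N <= n)%N -> (xs n / n%:R <= 2).
  move=> Nn; have n0 : (0 : R) < n%:R by rewrite ltr0n; exact: leq_trans N1 Nn.
  rewrite ler_pdivrMr //; have := xs_le n Nn; rewrite natrM /=; lra.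
split.
  rewrite limn_einf_lim; apply: lime_ge; first exact: is_cvg_einfs.
  exists N => // n /= Nn; apply: le_ereal_inf_tmp => _ [k /= nk <-].
  rewrite lee_fin; apply: r1; exact: leq_trans Nn nk.
split; first exact: limn_einf_sup.
rewrite limn_esup_lim; apply: lime_le; first exact: is_cvg_esups.
exists N => // n /= Nn; apply: ge_ereal_sup => _ [k /= nk <-].
rewrite lee_fin; apply: r2; exact: leq_trans Nn nk.
Qed.

End Construct.
Theorem lemma5p3 (R : realType) (d : measure_display) (T : measurableType d)
  (P : probability T R) (ei es : R) (chi : R -> R) (omega : T -> int -> R) :
  0 < ei -> ei < es -> 2 < es / ei ->
  {within `[0, +oo[, continuous chi} ->
  (forall x, 0 <= x -> 0 <= chi x <= 1) ->
  (forall x y, 0 <= x -> x <= y -> chi y <= chi x) ->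
  (forall x, 0 <= x -> x <= 1 -> chi x = 1) ->
  (forall x, 2 <= x -> chi x = 0) ->
  poisson_point_process P omega ->
  exists c0 : R, 0 < c0 /\
    {ae P, forall w, exists xs : nat -> R,
      (forall n m, (n < m)%N -> xs n < xs m) /\
      xs @ \oo --> +oo /\
      (forall n : nat, (0 < n)%N ->
         (forall x, xs n - 2 * c0 * ln n%:R <= x <= xs n ->
            xi ei es chi omega w x = ei) /\
         (forall x, xs n + 2 <= x <= xs n + 2 * c0 * ln n%:R - 2 ->
            xi ei es chi omega w x = es) /\
         (forall x y, xs n - 2 * c0 * ln n%:R <= x -> x <= y ->
            y <= xs n + 2 * c0 * ln n%:R - 2 ->
            xi ei es chi omega w x <= xi ei es chi omega w y)) /\
      (1%:E <= limn_einf (fun n => (xs n / n%:R)%:E))%E /\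
      (limn_einf (fun n => (xs n / n%:R)%:E) <=
         limn_esup (fun n => (xs n / n%:R)%:E))%E /\
      (limn_esup (fun n => (xs n / n%:R)%:E) <= 2%:E)%E}.
Proof.
move=> ei0 eies _ _ chi01 chimono chi1 chi0 PPP.
have [momega _] := PPP.
exists (cc0 R); split; first exact: cc0_gt0.
exists (lim_sup_set (Fm R d T omega)); split.
- exact: (@limsup_meas R d T omega momega).
- exact: (@limsup_null R d T P omega momega PPP).
- move=> w /= Hw; apply: contrapT => Hl; apply: Hw.
  have [N [N1 HN]] := @eventually_good R d T omega w Hl.
  exact: (@construct R ei es chi T omega eies chi01 chimono chi1 chi0 w N N1 HN).
Qed.
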